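(* Let $\mathbb{K}$ be a field of characteristic $0$, $\mathcal{S}=\mathbb{K}[x_0,\dots,x_n]$, $R=\mathbb{K}[x_1,\dots,x_n]$, $k\le d$, $\omega\in\mathcal{S}_k$ and $\ell=x_0+\xi_1x_1+\dots+\xi_nx_n$ with $\xi\in\mathbb{K}^n$ and $\ell\nmid\omega$. Let $I_\xi:=\{p\in R:p\star(\omega^{d,\ell,\mathbf x}(\mathbf z)\,e_\xi(\mathbf z))=0\}$ and $\mathcal{A}_\xi:=R/I_\xi$. Then $\mathcal{N}(\mathcal{A}_\xi)-1=k=\deg(\omega)$.
   Context: $R^*$ is identified with $\mathbb{K}[[z_1,\dots,z_n]]$ via $\sum_\alpha\varphi_\alpha\mathbf z^\alpha/\alpha!\leftrightarrow(\mathbf x^\alpha\mapsto\varphi_\alpha)$; for $p\in R$, $p\star\varphi$ is the functional $q\mapsto\varphi(pq)$; $e_\xi(\mathbf z)=\exp(\sum_i\xi_iz_i)$. Writing $\omega=\sum_{j=0}^k\omega_j\ell^{k-j}$ with $\omega_j\in\mathbb{K}[x_1,\dots,x_n]_j$, set $\omega^{d,\ell,\mathbf x}:=\frac1{d!}\sum_{j=0}^k(d-j)!\,\omega_j$, read in the variables $z_1,\dots,z_n$. $I_\xi$ is an ideal contained in $\mathfrak m_\xi=(x_1-\xi_1,\dots,x_n-\xi_n)$, so $a(\xi)$ is well defined for $a\in\mathcal{A}_\xi$. The nil-index $\mathcal{N}(\mathcal{A}_\xi)$ is the minimal $N\in\mathbb{N}$ such that $(a-a(\xi))^N=0$ in $\mathcal{A}_\xi$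 for every $a\in\mathcal{A}_\xi$. *)

(* Defs.v *)
From HB Require Import structures.
From mathcomp Require Import all_boot all_order all_algebra.
From mathcomp Require Import mpoly.
Set Implicit Arguments. Unset Strict Implicit. Unset Printing Implicit Defensive.
Import Order.TTheory GRing.Theory.
Local Open Scope ring_scope.

Section Defs.
Variables (K : fieldType) (n : nat).

Definition mfact (a : 'X_{1..n}) : nat := \prod_(i < n) (a i)`!.

(* Formal power series in z_1..z_n, given by their ordinary coefficients:
   F = \sum_alpha F alpha * z^alpha. *)
Definition series := 'X_{1..n} -> K.

(* e_xi(z) = exp(sum_i xi_i z_i) = sum_alpha xi^alpha / alpha! z^alpha *)
Definition exp_series (xi : 'I_n -> K) : series :=
  fun a => (\prod_(i < n) xi i ^+ a i) / (mfact a)%:R.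

Definition polyser_mul (g : {mpoly K[n]}) (F : series) : series :=
  fun a => \sum_(m <- msupp g) (if (m <= a)%MM then g@_m * F (a - m)%MM else 0).

(* The identification R^* = K[[z]]:  sum_alpha phi_alpha z^alpha/alpha!  <->
   (x^alpha |-> phi_alpha).  A series with ordinary coefficients F thus
   corresponds to phi_alpha = alpha! * F alpha, extended linearly to R. *)
Definition functional_of_series (F : series) : {mpoly K[n]} -> K :=
  fun q => \sum_(m <- msupp q) q@_m * ((mfact m)%:R * F m).

Definition star (p : {mpoly K[n]}) (phi : {mpoly K[n]} -> K) : {mpoly K[n]} -> K :=
  fun q => phi (p * q).

Definition embedRS (p : {mpoly K[n]}) : {mpoly K[n.+1]} :=
  mmap (@mpolyC n.+1 K) (fun i : 'I_n => 'X_(lift ord0 i)) p.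

Definition lin_form (xi : 'I_n -> K) : {mpoly K[n.+1]} :=
  'X_ord0 + \sum_(i < n) xi i *: 'X_(lift ord0 i).

Definition omega_dlx (d k : nat) (om : nat -> {mpoly K[n]}) : {mpoly K[n]} :=
  ((d`!)%:R)^-1 *: \sum_(j < k.+1) ((d - j)`!)%:R *: om j.

Definition I_xi (d k : nat) (om : nat -> {mpoly K[n]}) (xi : 'I_n -> K)
  (p : {mpoly K[n]}) : Prop :=
  forall q, star p (functional_of_series (polyser_mul (omega_dlx d k om) (exp_series xi))) q = 0.

Definition nil_bound (I : {mpoly K[n]} -> Prop) (xi : 'I_n -> K) (N : nat) : Prop :=
  forall a : {mpoly K[n]}, I ((a - (a.@[xi])%:MP) ^+ N).

(* N is the nil-index of R/I (relative to the point xi): minimal such N *)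
Definition is_nil_index (I : {mpoly K[n]} -> Prop) (xi : 'I_n -> K) (N : nat) : Prop :=
  nil_bound I xi N /\ forall M, nil_bound I xi M -> (N <= M)%N.

End Defs.

(* Main.v *)
Require Import Defs.
From HB Require Import structures.
From mathcomp Require Import all_boot all_order all_algebra.
From mathcomp Require Import mpoly.
From mathcomp Require Import ring.
Import GRing.Theory.
Local Open Scope ring_scope.
Definition enc (B : nat) (s : seq nat) : nat := foldr (fun x acc => x + B * acc)%N 0%N s.

Lemma enc_inj B s s' : size s = size s' -> all (fun x => x < B)%N s ->
  all (fun x => x < B)%N s' -> enc B s = enc B s' -> s = s'.
Proof.
elim: s s' => [|x s IH] [|y s'] //= [Hs] /andP[hx hs] /andP[hy hs'] He.
have Hm : x = y.
  have := congr1 (fun z => z %% B)%N He => /=.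
  by rewrite ![(_ + B * _)%N]addnC ![(B * _)%N]mulnC !modnMDl !modn_small.
subst y; congr (_ :: _); apply: IH => //.
have hB : (0 < B)%N by apply: leq_ltn_trans hx.
move/eqP: He; rewrite eqn_add2l eqn_mul2l => /orP[/eqP B0|/eqP //].
by rewrite B0 in hB.
Qed.

Lemma enc_sum B s : enc B s = (\sum_(0 <= i < size s) nth 0%N s i * B ^ i)%N.
Proof.
elim: s => [|x s IH] /=; first by rewrite big_geq.
rewrite big_nat_recl // expn0 muln1 IH; congr (_ + _)%N.
rewrite big_distrr /=; apply: eq_bigr => i _.
by rewrite expnS mulnCA.
Qed.

Lemma natr_inj (K : fieldType) : [pchar K] =i pred0 -> injective (fun i : nat => (i%:R : K)).
Proof.
move=> /pcharf0P H i j /= Hij.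
wlog le : i j Hij / (i <= j)%N.
  move=> W; case: (leqP i j) => h; first exact: W.
  by symmetry; apply: W => //; apply: ltnW.
have : ((j - i)%N%:R : K) = 0 by rewrite natrB // Hij subrr.
move/eqP; rewrite H subn_eq0 => h; apply/eqP; by rewrite eqn_leq le h.
Qed.

Lemma exists_nonroot (K : fieldType) (n : nat) (P : {mpoly K[n]}) :
  [pchar K] =i pred0 -> P != 0 -> exists v : 'I_n -> K, P.@[v] != 0.
Proof.
move=> ch P0.
pose B := msize P.
pose e (m : 'X_{1..n}) := enc B (multinom_val m).
have lt_B : forall m, m \in msupp P -> all (fun x => x < B)%N (multinom_val m).
  move=> m mP; apply/allP => x /tnthP [i ->].
  apply: leq_ltn_trans (msize_mdeg_lt mP).
  rewrite mdegE (bigD1 i) //=; exact: leq_addr.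
have e_inj : {in msupp P &, injective e}.
  move=> m m' mP m'P He.
  apply: val_inj; apply: val_inj => /=.
  apply: (@enc_inj B _ _ _ (lt_B _ mP) (lt_B _ m'P) He).
  by rewrite !size_tuple.
have e_prod : forall (t : K) (m : 'X_{1..n}), \prod_(i < n) (t ^+ (B ^ i)) ^+ (m i) = t ^+ e m.
  move=> t m.
  rewrite (eq_bigr (fun i : 'I_n => t ^+ (m i * B ^ i)%N)); last first.
    by move=> i _; rewrite -exprM mulnC.
  rewrite -(big_morph (fun k => t ^+ k) (exprD t) (expr0 t)).
  congr (_ ^+ _); rewrite /e enc_sum size_tuple big_mkord.
  apply: eq_bigr => i _; rewrite /fun_of_multinom (tnth_nth 0%N) //=.
pose Q : {poly K} := \sum_(m <- msupp P) P@_m *: 'X^(e m).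
have QP : forall t : K, Q.[t] = P.@[fun i => t ^+ (B ^ i)].
  move=> t; rewrite horner_sum mevalE; apply: eq_bigr => m _.
  by rewrite hornerZ hornerXn e_prod.
have Q0 : Q != 0.
  have P0' : msupp P != [::] by rewrite msupp_eq0.
  case E: (msupp P) P0' => [//|m0 s] _.
  have m0P : m0 \in msupp P by rewrite E mem_head.
  apply/eqP => /(congr1 (fun q : {poly K} => q`_(e m0))).
  rewrite coef_sumMXn coef0 -big_filter.
  rewrite (bigD1_seq m0) //= ?filter_uniq ?msupp_uniq ?mem_filter ?eqxx ?m0P //.
  rewrite big1_seq ?addr0.
    by move/eqP; rewrite mcoeff_eq0 m0P.
  move=> m /andP[ne]; rewrite mem_filter => /andP[/eqP He mP].
  by move: ne; rewrite (e_inj _ _ mP m0P He) eqxx.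
pose rs := [seq (i%:R : K) | i <- iota 0 (size Q)].
have : ~~ all (root Q) rs.
  apply/negP => Hall.
  have := max_poly_roots Q0 Hall.
  rewrite map_inj_uniq ?iota_uniq; last exact: natr_inj.
  by rewrite size_map size_iota ltnn => /(_ isT).
case/allPn => x _ /negP Hx.
exists (fun i => x ^+ (B ^ i)); rewrite -QP; apply/negP => /eqP H; apply: Hx.
by rewrite /root H.
Qed.
Section Deriv.
Variables (K : fieldType) (n : nat).
Implicit Types (b p q r : {mpoly K[n]}).

Definition dseq (mu : 'X_{1..n}) : seq 'I_n := flatten [seq nseq (mu i) i | i <- enum 'I_n].

Lemma size_dseq mu : size (dseq mu) = mdeg mu.
Proof.
rewrite /dseq size_flatten /shape -map_comp sumnE big_map /= mdegE big_enum /=.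
by apply: eq_bigr => i _; rewrite size_nseq.
Qed.

Lemma prod_dseq (v : 'I_n -> K) mu : \prod_(i <- dseq mu) v i = \prod_(i < n) v i ^+ mu i.
Proof.
rewrite /dseq big_flatten big_map big_enum /=; apply: eq_bigr => i _.
rewrite big_nseq; elim: (mu i) => [|k IH] /=; first by rewrite expr0.
by rewrite IH exprS.
Qed.

Lemma dpow b i e : exists s, (b ^+ e.+1)^`M(i) = b ^+ e * s.
Proof.
elim: e => [|e [s IH]]; first by exists b^`M(i); rewrite expr1 expr0 mul1r.
exists (b^`M(i) + s).
rewrite exprS mderivM IH [_ ^+ e.+1]exprS; ring.
Qed.

Lemma dstep b i e r : exists r', (b ^+ e.+1 * r)^`M(i) = b ^+ e * r'.
Proof.
have [s Hs] := dpow b i e.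
exists (s * r + b * r^`M(i)).
rewrite mderivM Hs [b ^+ e.+1]exprS; ring.
Qed.

Lemma dfold b s j r : (size s <= j)%N ->
  exists r', foldr (@mderiv n K) (b ^+ j * r) s = b ^+ (j - size s) * r'.
Proof.
elim: s => [|i s IH] /=; first by move=> _; exists r; rewrite subn0.
move=> Hs; have [r' ->] := IH (ltnW Hs).
have -> : (j - size s = (j - (size s).+1).+1)%N by rewrite subnSK.
exact: dstep.
Qed.

Lemma dvanish b (xi : 'I_n -> K) mu j r : b.@[xi] = 0 -> (mdeg mu < j)%N ->
  ((b ^+ j * r)^`M[mu]).@[xi] = 0.
Proof.
move=> b0 lt; rewrite mderivm_foldr -/(dseq mu).
have Hs : (size (dseq mu) <= j)%N by rewrite size_dseq ltnW.
have [r' ->] := dfold b _ _ r Hs.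
rewrite mevalM rmorphXn /= b0 expr0n /=.
by rewrite size_dseq subn_eq0 leqNgt lt mul0r.
Qed.

Definition linf (v : 'I_n -> K) : {mpoly K[n]} := \sum_(i < n) v i *: 'X_i.

Lemma dlinf v i : (linf v)^`M(i) = v i *: 1.
Proof.
rewrite /linf raddf_sum /= (bigD1 i) //= big1 ?addr0.
  have E : (mnm1 i - mnm1 i)%MM = 0%MM by rewrite -{1}[mnm1 i]add0m addmK.
  by rewrite mderivZ mderivX mnm1E eqxx E mpolyX0 scale1r.
by move=> j ne; rewrite mderivZ mderivX mnm1E (negbTE ne) scale0r scaler0.
Qed.

Lemma dlinfc v c i : (linf v - c%:MP)^`M(i) = v i *: 1.
Proof. by rewrite mderivB mderivC subr0 dlinf. Qed.

Lemma dpowc b i (c : K) e : b^`M(i) = c *: 1 ->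
  (b ^+ e.+1)^`M(i) = ((e.+1)%:R * c) *: b ^+ e.
Proof.
move=> Hb; elim: e => [|e IH]; first by rewrite expr1 expr0 Hb mul1r.
rewrite exprS mderivM IH Hb -scalerAr -scalerAl mul1r -exprS -scalerDl.
congr (_ *: _); rewrite [in RHS]mulrS; ring.
Qed.

Lemma dfoldc b (c : 'I_n -> K) s j : (forall i, b^`M(i) = c i *: 1) -> (size s <= j)%N ->
  foldr (@mderiv n K) (b ^+ j) s = ((j ^_ (size s))%:R * \prod_(i <- s) c i) *: b ^+ (j - size s).
Proof.
move=> Hb; elim: s => [|i s IH] /=; first by move=> _; rewrite big_nil ffactn0 mulr1 scale1r subn0.
move=> Hs; rewrite IH ?(ltnW Hs) // mderivZ.
have E : (j - size s = (j - (size s).+1).+1)%N by rewrite subnSK.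
rewrite E (dpowc _ _ _ _ (Hb i)) scalerA big_cons -E ffactnSr natrM; congr (_ *: _).
ring.
Qed.

Lemma devalc b (c : 'I_n -> K) (xi : 'I_n -> K) mu j : (forall i, b^`M(i) = c i *: 1) ->
  b.@[xi] = 0 -> (mdeg mu <= j)%N ->
  ((b ^+ j)^`M[mu]).@[xi] = if mdeg mu == j then (j`!)%:R * \prod_(i < n) c i ^+ mu i else 0.
Proof.
move=> Hb b0 le; rewrite mderivm_foldr -/(dseq mu) (dfoldc _ _ _ _ Hb) ?size_dseq //.
rewrite mevalZ rmorphXn /= b0 expr0n prod_dseq subn_eq0.
case: eqP => [->|ne]; first by rewrite leqnn ffactnn mulr1.
by rewrite leqNgt ltn_neqAle le andbT; move/eqP: ne => -> /=; rewrite mulr0.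
Qed.
End Deriv.
Section Main.
Variables (K : fieldType) (n : nat).
Hypothesis ch : [pchar K] =i pred0.

Lemma natr_ne0 {i : nat} : (0 < i)%N -> (i%:R : K) != 0.
Proof. by move/pcharf0P: ch => ->; rewrite -lt0n. Qed.

Lemma mfact_gt0 (a : 'X_{1..n}) : (0 < mfact a)%N.
Proof. by rewrite /mfact prodn_gt0 // => i; rewrite fact_gt0. Qed.

Definition ffp (m mu : 'X_{1..n}) : nat := \prod_(i < n) (m i) ^_ (mu i).

Lemma ffp_le (m mu : 'X_{1..n}) : (mu <= m)%MM -> mfact m = (ffp m mu * mfact (m - mu))%N.
Proof.
move=> /forallP H; rewrite /mfact /ffp -big_split /=; apply: eq_bigr => i _.
by rewrite mnmBE ffact_fact.
Qed.

Lemma ffp_nle (m mu : 'X_{1..n}) : ~~ (mu <= m)%MM -> ffp m mu = 0%N.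
Proof.
rewrite negb_forall => /existsP [i Hi]; rewrite /ffp (bigD1 i) //=.
by rewrite ffact_small ?mul0n // ltnNge.
Qed.

Definition Dop (G : {mpoly K[n]}) (xi : 'I_n -> K) (q : {mpoly K[n]}) : K :=
  \sum_(mu <- msupp G) G@_mu * (q^`M[mu]).@[xi].

Lemma phiE (G : {mpoly K[n]}) (xi : 'I_n -> K) (q : {mpoly K[n]}) :
  functional_of_series (polyser_mul G (exp_series xi)) q = Dop G xi q.
Proof.
rewrite /functional_of_series /Dop /polyser_mul.
rewrite [RHS](eq_bigr (fun mu => \sum_(m <- msupp q) G@_mu * (q@_m * (ffp m mu)%:R * \prod_(i < n) xi i ^+ (m - mu)%MM i))); last first.
  move=> mu _; rewrite mderivmE raddf_sum mulr_sumr /=; apply: eq_bigr => m _.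
  by rewrite mevalZ mevalX.
rewrite exchange_big /=; apply: eq_bigr => m _.
rewrite mulr_sumr mulr_sumr; apply: eq_bigr => mu _.
case: (boolP (mu <= m)%MM) => H; last by rewrite ffp_nle // !(mulr0, mul0r).
rewrite /exp_series (ffp_le _ _ H) natrM.
have nz := natr_ne0 (mfact_gt0 (m - mu)%MM).
field; exact: nz.
Qed.

Variables (d k : nat) (om : nat -> {mpoly K[n]}).
Hypothesis hom : forall j, (j <= k)%N -> om j \is j.-homog.

Local Notation G := (omega_dlx d k om).

Lemma G_coef m : G@_m = ((d`!)%:R)^-1 * \sum_(j < k.+1) ((d - j)`!)%:R * (om j)@_m.
Proof.
rewrite /omega_dlx mcoeffZ raddf_sum /=; congr (_ * _).
by apply: eq_bigr => j _; rewrite mcoeffZ.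
Qed.

Lemma G_supp m : m \in msupp G -> (mdeg m <= k)%N.
Proof.
rewrite mcoeff_msupp G_coef; apply: contraR; rewrite -ltnNge => lt.
rewrite big1 ?mulr0 // => j _.
rewrite (dhomog_nemf_coeff (hom _ (ltn_ord j))) ?mulr0 //.
by rewrite neq_ltn (leq_trans _ lt) ?orbT // ltnS -ltnS.
Qed.

Lemma piZ j c (p : {mpoly K[n]}) : pihomog mdeg j (c *: p) = c *: pihomog mdeg j p.
Proof.
have LZ := @pihomog_is_linear n K mdeg j.
by rewrite -[c *: p]addr0 LZ pihomog0 addr0.
Qed.

Lemma G_top : pihomog mdeg k G = (((d`!)%:R)^-1 * ((d - k)`!)%:R) *: om k.
Proof.
rewrite /omega_dlx piZ.
rewrite (big_morph (pihomog mdeg k) (@pihomogD _ _ _ _) (@pihomog0 _ _ _ _)).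
rewrite big_ord_recr /= big1 ?add0r.
  by rewrite piZ pihomog_dE ?hom // scalerA.
move=> j _; rewrite piZ (pihomog_ne0 (d:=j)) ?scaler0 //.
  by rewrite neq_ltn ltn_ord.
by apply: hom; apply: ltnW.
Qed.

Lemma b_eval0 (xi : 'I_n -> K) (a : {mpoly K[n]}) : (a - (a.@[xi])%:MP).@[xi] = 0.
Proof. by rewrite mevalB mevalC subrr. Qed.

Lemma upper (xi : 'I_n -> K) (a q : {mpoly K[n]}) :
  functional_of_series (polyser_mul G (exp_series xi)) ((a - (a.@[xi])%:MP) ^+ k.+1 * q) = 0.
Proof.
rewrite phiE /Dop big_seq big1 // => mu muG.
by rewrite dvanish ?mulr0 ?b_eval0 // ltnS G_supp.
Qed.

Lemma lower (xi v : 'I_n -> K) :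
  Dop G xi ((@linf K n v - ((@linf K n v).@[xi])%:MP) ^+ k)
  = (k`!)%:R * ((((d`!)%:R)^-1 * ((d - k)`!)%:R) * (om k).@[v]).
Proof.
rewrite -mevalZ -G_top pihomogE [X in _ * X]raddf_sum /= mulr_sumr /Dop.
rewrite [RHS]big_mkcond /= big_seq [RHS]big_seq; apply: eq_bigr => mu muG.
rewrite (@devalc K n _ v) ?b_eval0 ?G_supp //; last by move=> i; rewrite dlinfc.
case: eqP => _; last by rewrite mulr0.
by rewrite mevalZ mevalX; ring.
Qed.

End Main.

Theorem proposition4p16 (K : fieldType) (n : nat) (d k : nat)
  (omega : {mpoly K[n.+1]}) (xi : 'I_n -> K) (om : nat -> {mpoly K[n]}) :
  [pchar K] =i pred0 ->
  (k <= d)%N ->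
  omega \is k.-homog ->
  (* omega = sum_{j=0}^k omega_j l^{k-j} with omega_j in K[x_1..x_n]_j *)
  (forall j, (j <= k)%N -> om j \is j.-homog) ->
  omega = \sum_(j < k.+1) embedRS (om j) * lin_form xi ^+ (k - j) ->
  (* l does not divide omega *)
  ~ (exists q : {mpoly K[n.+1]}, omega = q * lin_form xi) ->
  is_nil_index (I_xi d k om xi) xi k.+1.
Proof.
move=> ch kd homega hom Hom ndiv.
have omk0 : om k != 0.
  apply/eqP => E; apply: ndiv.
  exists (\sum_(j < k) embedRS (om j) * lin_form xi ^+ (k - j.+1)).
  rewrite Hom big_ord_recr /= E subnn expr0 mulr1 {2}/embedRS mmap0 addr0 mulr_suml.
  by apply: eq_bigr => j _; rewrite -mulrA -exprSr subnSK.
split.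
  by move=> a q; rewrite /star; apply: upper.
move=> M HM; rewrite ltnNge; apply/negP => le.
have [v hv] := @exists_nonroot K n (om k) ch omk0.
set b := (linf K n v - ((linf K n v).@[xi])%:MP).
have := HM (linf K n v) (b ^+ (k - M)).
rewrite /star -/b -exprD subnKC // phiE // lower //.
have F : forall i, ((i`!)%:R : K) != 0 by move=> i; apply: (@natr_ne0 K ch); rewrite fact_gt0.
apply/eqP; apply: mulf_neq0; first exact: F.
apply: mulf_neq0 => //; apply: mulf_neq0 => //.
by rewrite invr_eq0.
Qed.
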